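(* Let $k\ge 1$ and $n\ge 1$ be integers and let $$D_n(k,x)=\left(\binom{i+k-1}{j+k-1}x^k-\binom{i}{j-1}\right)_{i,j=0}^{n-1}.$$ Then $\det D_n(k,x)=x^nF^{(k)}_{(k-1)n}(x)$.
   Context: Binomial coefficients: for integers $m\ge 0$ and $j$, $\binom{m}{j}$ is the usual binomial coefficient, with $\binom{m}{j}=0$ if $j<0$ or $j>m$. For an integer $k\ge1$, the generalized Fibonacci polynomials $F^{(k)}_n(x)\in\mathbb{Z}[x]$ ($n\ge0$) are defined by $F^{(k)}_n(x)=x^n$ for $0\le n<k$ and $F^{(k)}_n(x)=xF^{(k)}_{n-1}(x)+F^{(k)}_{n-k}(x)$ for $n\ge k$. *)

(* Defs.v *)
From HB Require Import structures.
From mathcomp Require Import all_boot all_order all_algebra.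
Set Implicit Arguments. Unset Strict Implicit. Unset Printing Implicit Defensive.
Import Order.TTheory GRing.Theory Num.Theory.
Local Open Scope ring_scope.

(* fibseq k n = [:: F_0; F_1; ...; F_n] for the generalized Fibonacci
   polynomials F^(k) in Z[x]. *)
Fixpoint fibseq (k : nat) (n : nat) : seq {poly int} :=
  match n with
  | 0 => [:: 1]
  | m.+1 =>
      let s := fibseq k m in
      let new := if (n < k)%N then 'X^n
                 else 'X * nth 0 s m + nth 0 s (n - k)%N in
      rcons s new
  end.

Definition genFib (k n : nat) : {poly int} := nth 0 (fibseq k n) n.

Definition binz (m : nat) (j : int) : nat :=
  match j with Posz j' => 'C(m, j') | Negz _ => 0%N end.

Definition Dmat (k n : nat) : 'M[{poly int}]_n :=
  \matrix_(i < n, j < n)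
    (('C(i + k - 1, j + k - 1))%:R * 'X^k - (binz i (j%:Z - 1))%:R).

(* Main.v *)
Require Import Defs.
From HB Require Import structures.
From mathcomp Require Import all_boot all_order all_algebra.
From mathcomp Require Import zify ring lra.
Import GRing.Theory.
Local Open Scope ring_scope.


Lemma size_fibseq k n : size (fibseq k n) = n.+1.
Proof. by elim: n => [|n IH] //=; rewrite size_rcons IH. Qed.

Lemma nth_fibseq k n j : (j <= n)%N -> nth 0 (fibseq k n) j = genFib k j.
Proof.
elim: n => [|n IH] Hj; first by move: Hj; rewrite leqn0 => /eqP ->.
rewrite leq_eqVlt in Hj; case/orP: Hj => [/eqP ->|Hj]; first by [].
by rewrite /= nth_rcons size_fibseq Hj IH.
Qed.

Lemma genFib_small k n : (n < k)%N -> genFib k n = 'X^n.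
Proof.
case: n => [|n] Hn; first by rewrite /genFib /= expr0.
by rewrite /genFib /= nth_rcons size_fibseq ltnn eqxx Hn.
Qed.

Lemma genFib_rec k n : (1 <= k)%N -> (k <= n)%N ->
  genFib k n = 'X * genFib k (n - 1) + genFib k (n - k).
Proof.
case: n => [|n] Hk Hn; first by lia.
rewrite /genFib /= nth_rcons size_fibseq ltnn eqxx ltnNge Hn /= subn1 /=.
by rewrite !nth_fibseq //; lia.
Qed.
Definition Fz (k : nat) (t : int) : {poly int} :=
  match t with Posz n => genFib k n | Negz _ => 0 end.

Lemma Fz_nat k (t : int) (n : nat) : t = n%:Z -> Fz k t = genFib k n.
Proof. by move->. Qed.

Lemma Fz_neg k (t : int) : (t < 0)%R -> Fz k t = 0.
Proof. by case: t. Qed.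

Lemma Fz_rec c (t : int) : t <> -1 ->
  Fz c.+1 (t + 1) = 'X * Fz c.+1 t + Fz c.+1 (t - c%:Z).
Proof.
move=> Ht.
case: (boolP (t < 0)%R) => Ht0.
  have Ht2 : (t < -1)%R by lia.
  by rewrite !Fz_neg ?mulr0 ?addr0 //; lia.
have [n En] : exists n : nat, t = n%:Z by exists `|t|%N; lia.
subst t.
rewrite (@Fz_nat _ _ n.+1); last by lia.
rewrite (@Fz_nat _ _ n) //.
case: (ltnP n.+1 c.+1) => Hn.
  rewrite Fz_neg; last by lia.
  by rewrite !genFib_small // ?exprS ?addr0 //; lia.
rewrite (@Fz_nat _ _ (n - c)%N); last by lia.
rewrite genFib_rec //; congr (_ * genFib _ _ + genFib _ _); lia.
Qed.
Lemma Fz_G c a : forall m : int,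
  (forall j d : nat, (j + d < a)%N -> m + j%:Z + 1 <> c%:Z * d%:Z) ->
  Fz c.+1 (m + a%:Z) =
  \sum_(d < a.+1) ('C(a, d))%:R * 'X^(a - d) * Fz c.+1 (m - c%:Z * d%:Z).
Proof.
elim: a => [|a IH] m Hm.
  rewrite big_ord1 addr0 mulr0 subr0 /=. by rewrite expr0 !mul1r.
have -> : m + a.+1%:Z = (m + 1) + a%:Z by lia.
rewrite IH; last by move=> j d Hjd; have := Hm j.+1 d; lia.
have E : forall d : 'I_a.+1, ('C(a, d))%:R * 'X^(a - d) * Fz c.+1 (m + 1 - c%:Z * d%:Z)
   = ('C(a, d))%:R * 'X^(a.+1 - d) * Fz c.+1 (m - c%:Z * d%:Z)
     + ('C(a, d))%:R * 'X^(a - d) * Fz c.+1 (m - c%:Z * d.+1%:Z).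
  move=> d.
  have -> : m + 1 - c%:Z * d%:Z = (m - c%:Z * d%:Z) + 1 by lia.
  rewrite Fz_rec; last by have := Hm 0%N d; have := ltn_ord d; lia.
  have -> : m - c%:Z * d%:Z - c%:Z = m - c%:Z * d.+1%:Z by lia.
  have ha : (a.+1 - d)%N = (a - d).+1 by have := ltn_ord d; lia.
  by rewrite ha exprS; ring.
rewrite (eq_bigr _ (fun d _ => E d)) big_split /=.
rewrite [in RHS]big_ord_recl /=.
under [in RHS]eq_bigr => d _ do rewrite /bump /= add1n binS natrD !mulrDl.
rewrite big_split /= [X in X + _ = _]big_ord_recl /= addrA; congr (_ + _ + _).
  by rewrite !bin0 !subn0.
rewrite big_ord_recr /= bin_small // !mul0r addr0; apply: eq_bigr => d _.
by rewrite /bump /=.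
Qed.

Lemma sum_ext (R : Type) (idx : R) (op : Monoid.law idx) (F : nat -> R) n m :
  (n <= m)%N -> (forall d, (n <= d)%N -> (d < m)%N -> F d = idx) ->
  \big[op/idx]_(d < n) F d = \big[op/idx]_(d < m) F d.
Proof.
move=> Hnm H; rewrite (big_ord_widen _ _ Hnm) big_mkcond; apply: eq_bigr => d _.
case: ifP => // /negbT; rewrite -leqNgt => h; rewrite H //.
Qed.

Definition w c (l : nat) : {poly int} := 'X^l * genFib c.+1 (c * l).

Lemma key c i N : (i < N)%N ->
  'X^(c.+1) * \sum_(l < N) ((i <= l + c)%N * 'C(c, l + c - i))%:R * w c l
  = w c i.+1.
Proof.
move=> HiN.
pose U (d : nat) : {poly int} :=
  ('C(c, d))%:R * 'X^(c.+1 + i - d) * Fz c.+1 (c%:Z * i%:Z - c%:Z * d%:Z).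
have RHS : w c i.+1 = \sum_(d < c + i.+1) U d.
  rewrite /w -(@Fz_nat c.+1 (c%:Z * i%:Z + c%:Z) (c * i.+1)%N); last by rewrite mulnS; lia.
  rewrite Fz_G; last first.
    move=> j d Hjd; case: (leqP d i) => Hdi.
      have : (c * d <= c * i)%N by rewrite leq_mul2l Hdi orbT.
      lia.
    have : (c * i.+1 <= c * d)%N by rewrite leq_mul2l Hdi orbT.
    rewrite mulnS; lia.
  rewrite -(@sum_ext _ _ _ U c.+1); last first.
  - by move=> d Hd _; rewrite /U bin_small // mul0r mul0r.
  - lia.
  rewrite mulr_sumr; apply: eq_bigr => d _.
  rewrite /U mulrA; congr (_ * _); rewrite mulrCA -exprD; congr (_ * 'X^_).
  have := ltn_ord d; lia.
rewrite RHS.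
rewrite -(@sum_ext _ _ _ (fun l => ((i <= l + c)%N * 'C(c, l + c - i))%:R * w c l) i.+1 N) //; last first.
  by move=> l Hl _; rewrite bin_small ?muln0 ?mul0r //; lia.
rewrite -(@sum_ext _ _ _ U i.+1 (c + i.+1)); last first.
- move=> d Hd _; rewrite /U; case: c {RHS U} => [|c'].
    by rewrite bin_small ?mul0r //; lia.
  rewrite Fz_neg ?mulr0 //.
  have : (c'.+1 * i.+1 <= c'.+1 * d)%N by rewrite leq_mul2l Hd.
  rewrite mulnS; lia.
- lia.
rewrite mulr_sumr (reindex_inj rev_ord_inj) /=; apply: eq_bigr => d _.
rewrite subSS /U /w; have Hd := ltn_ord d.
case: (leqP d c) => Hdc; last first.
  have -> : (i <= i - d + c)%N = false by lia.
  by rewrite mul0n mul0r mulr0 bin_small // !mul0r.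
have -> : (i <= i - d + c)%N by lia.
have -> : (i - d + c - i = c - d)%N by lia.
rewrite bin_sub // mul1n.
have hcd : (c * d <= c * i)%N by rewrite leq_mul2l; lia.
rewrite (@Fz_nat _ _ (c * (i - d))); last by rewrite mulnBr; lia.
rewrite mulrCA !mulrA -(mulrA _ 'X^_ 'X^_) -exprD; congr (_ * 'X^_ * _); lia.
Qed.

Definition Mm c n : 'M[{poly int}]_n := \matrix_(l < n, j < n)
  ('X^(c.+1) * ((l <= j + c)%N * 'C(c, j + c - l))%:R - (l.+1 == j)%:R).

Definition Pm n : 'M[{poly int}]_n := \matrix_(i < n, l < n) ('C(i, l))%:R.

Lemma vand_n c n (i j : nat) : (i < n)%N ->
  (\sum_(l < n) 'C(i, l) * ((l <= j + c) * 'C(c, j + c - l)))%N = 'C(i + c, j + c).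
Proof.
move=> Hi.
rewrite -(binomial.Vandermonde i c (j + c)).
rewrite (@sum_ext _ _ _ (fun l => 'C(i, l) * ((l <= j + c) * 'C(c, j + c - l)))%N n (n + (j + c).+1)); last first.
  by move=> d Hd _; rewrite bin_small //; lia.
  lia.
rewrite [RHS](eq_bigr (fun l : 'I_(j+c).+1 => 'C(i, l) * ((l <= j + c) * 'C(c, j + c - l)))%N); last first.
  by move=> l _; rewrite (_ : (l <= j + c)%N) ?mul1n //; have := ltn_ord l; lia.
rewrite (@sum_ext _ _ _ (fun l => 'C(i, l) * ((l <= j + c) * 'C(c, j + c - l)))%N (j + c).+1 (n + (j + c).+1)) //; last first.
  by move=> d Hd _; rewrite (_ : (d <= j + c)%N = false) ?muln0 //; lia.
lia.
Qed.

Lemma DPM c n : Dmat c.+1 n = Pm n *m Mm c n.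
Proof.
apply/matrixP => i j; rewrite !mxE.
under eq_bigr do rewrite !mxE mulrBr.
rewrite sumrB; congr (_ - _).
  under eq_bigr do rewrite mulrCA -natrM.
  rewrite -mulr_sumr -natr_sum mulrC vand_n //.
  by rewrite !addnS !subn1.
case: j => [[|j'] Hj] /=.
  rewrite big1 //= => l _; by rewrite mulr0.
rewrite (bigD1 (Ordinal (ltnW Hj))) //= eqxx mulr1 big1 ?addr0; last first.
  move=> l Hl; have -> : (l.+1 == j'.+1)%N = false.
    by apply/negbTE; apply: contra Hl => /eqP [H]; apply/eqP/val_inj.
  by rewrite mulr0.
by rewrite subn1.
Qed.

Lemma det_Pm n : \det (Pm n) = 1.
Proof.
rewrite det_trig; last first.
  by apply/forallP => i; apply/forallP => j; apply/implyP => h; rewrite mxE bin_small.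
by apply: big1 => i _; rewrite mxE binn.
Qed.

Lemma sum_delta n (f : nat -> {poly int}) (a : nat) :
  \sum_(l < n) (a == l)%:R * f l = if (a < n)%N then f a else 0.
Proof.
case: ltnP => h.
  rewrite (bigD1 (Ordinal h)) //= eqxx mul1r big1 ?addr0 // => l Hl.
  have -> : (a == l) = false.
    by apply/negbTE; apply: contra Hl => /eqP H; apply/eqP/val_inj.
  by rewrite mul0r.
apply: big1 => l _; have -> : (a == l) = false by have := ltn_ord l; lia.
by rewrite mul0r.
Qed.

Definition Um c n : 'M[{poly int}]_n :=
  \matrix_(i < n, j < n) (if (nat_of_ord j == 0)%N then w c i else (i == j)%:R).

Lemma det_Um c n : \det (Um c n) = 1.
Proof.
rewrite det_trig; last first.
  apply/forallP => i; apply/forallP => j; apply/implyP => h; rewrite mxE.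
  have -> : (nat_of_ord j == 0)%N = false by lia.
  by have -> : (i == j) = false by apply/negbTE; apply/eqP => E; rewrite E ltnn in h.
apply: big1 => i _; rewrite mxE eqxx; case: ifP => // /eqP H0.
by rewrite /w H0 muln0 /genFib /= mul1r.
Qed.

Lemma det_Mm c n : \det (Mm c n.+1) = w c n.+1.
Proof.
rewrite -[LHS]mulr1 -(det_Um c n.+1) -det_mulmx.
set E := _ *m _.
have E0 : forall i : 'I_n.+1, E i ord0 = if (i == n :> nat) then w c n.+1 else 0.
  move=> i; rewrite /E mxE.
  under eq_bigr do rewrite !mxE /= mulrBl -mulrA.
  rewrite sumrB -mulr_sumr key //.
  rewrite sum_delta.
  case: (eqVneq (i : nat) n) => Hi.
    by rewrite Hi ltnn subr0.
  have -> : (i.+1 < n.+1)%N by have := ltn_ord i; lia.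
  by rewrite subrr.
have EJ : forall (i j : 'I_n.+1), (j : nat) != 0%N -> E i j = Mm c n.+1 i j.
  move=> i j hj; rewrite /E mxE (bigD1 j) //= big1 ?addr0.
    by rewrite [Um c n.+1 _ _]mxE (negbTE hj) eqxx mulr1.
  move=> l hl; rewrite [Um c n.+1 _ _]mxE (negbTE hj).
  by rewrite (negbTE hl) mulr0.
have Min : forall a b : 'I_n, row' ord_max (col' ord0 E) a b =
    'X^(c.+1) * ((a <= b.+1 + c)%N * 'C(c, b.+1 + c - a))%:R - (a.+1 == b.+1)%:R.
  move=> a b; rewrite mxE mxE EJ ?mxE //.
  have -> : (lift ord_max a : nat) = a by rewrite /= /bump leqNgt ltn_ord.
  by have -> : (lift ord0 b : nat) = b.+1 by rewrite /= /bump; lia.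
rewrite (expand_det_col _ ord0) big_ord_recr /= big1 ?add0r; last first.
  move=> i _; rewrite E0 /=.
  by rewrite (_ : (i == n :> nat) = false) ?mul0r //; have := ltn_ord i; lia.
rewrite E0 /= eqxx /cofactor /= addn0.
rewrite det_trig; last first.
  apply/forallP => a; apply/forallP => b; apply/implyP => h.
  rewrite Min bin_small; last by lia.
  rewrite muln0 mulr0 sub0r.
  have -> : (a.+1 == b.+1) = false by lia.
  by rewrite mulr0n oppr0.
rewrite (eq_bigr (fun _ => -1 : {poly int})); last first.
  by move=> i _; rewrite Min bin_small ?muln0 ?mulr0 ?eqxx ?sub0r //; lia.
rewrite prodr_const card_ord -exprD addnn -mul2n exprM sqrrN !expr1n mulr1 //.
Qed.

Theorem theorem4 (k n : nat) (hk : (1 <= k)%N) (hn : (1 <= n)%N) :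
  \det (Dmat k n) = 'X^n * genFib k ((k - 1) * n)%N.
Proof.
case: k hk => [|c] // _; case: n hn => [|n] // _.
by rewrite DPM det_mulmx det_Pm mul1r det_Mm /w subn1.
Qed.
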